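(* Let $D_{\mathrm{jnt}}$ be any distribution of $(\mathsf X,\bar{\mathsf Y},\mathsf Y)$ on $\mathcal X\times\{0,1\}\times\{0,1\}$, let $c,\bar c\in[0,1]$ and $\bar D\in\{\bar D_{\mathrm{DP}},\bar D_{\mathrm{EO}}\}$. Let $F$ be the fairness frontier: for $\tau\ge0$, $F(\tau)=V(\tau)-V(0)$ where $V(\tau)=\inf\{\mathrm{CS}(f;D,c): f\colon\mathcal X\to[0,1],\ \mathrm{CS}^\diamond(f;\bar D,\bar c)\ge\tau\}$. Define $$B_{c,\bar c}(u,v)=|u-\bar c|\cdot\mathbf 1[(u-\bar c)(v-c)<0],\qquad \Delta_{c,\bar c}(\bar\eta,\eta)=\mathbb E_{\mathsf X}\big[B_{c,\bar c}(\bar\eta(\mathsf X),\eta(\mathsf X))\big]-\mathbb I_\varphi(\bar P_1,\bar P_0),$$ with $\varphi(t)=-\min\big((1-\bar c)\bar\pi t,\ \bar c(1-\bar\pi)\big)$, and analogously $\Delta_{-c,\bar c}(\bar\eta,-\eta)=\mathbb E_{\mathsf X}\big[|\bar\eta(\mathsf X)-\bar c|\,\mathbf 1[(\bar\eta(\mathsf X)-\bar c)(-\eta(\mathsf X)+c)<0]\big]-\mathbb I_\varphi(\bar P_1,\bar P_0)$. Let $\tau^*=\min\big(\Delta_{c,\bar c}(\bar\eta,\eta),\Delta_{-c,\bar c}(\bar\eta,-\eta)\big)$. Then $F(\tau)=0$ for every $\tau\in[0,\tau^*]$.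
   Context: $D$ is the law of $(\mathsf X,\mathsf Y)$, $\bar D_{\mathrm{DP}}$ the law of $(\mathsf X,\bar{\mathsf Y})$, $\bar D_{\mathrm{EO}}$ the law of $(\mathsf X,\bar{\mathsf Y})$ conditional on $\mathsf Y=1$. $\eta(x)=\Pr(\mathsf Y=1\mid\mathsf X=x)$. With respect to $\bar D$: $\bar\eta(x)=\Pr_{\bar D}(\bar{\mathsf Y}=1\mid\mathsf X=x)$, $\bar\pi=\Pr_{\bar D}(\bar{\mathsf Y}=1)$, $\bar P_y$ is the law of $\mathsf X$ given $\bar{\mathsf Y}=y$ under $\bar D$, and $\mathbb E_{\mathsf X}$ is expectation over the $\mathsf X$-marginal of $\bar D$. For a convex $\varphi$, the $f$-divergence is $\mathbb I_\varphi(P,Q)=\int q\,\varphi(p/q)\,d\mu$ for densities $p,q$ w.r.t. a dominating measure $\mu$; for the $\varphi$ above this equals $-\int\min\big((1-\bar c)\bar\pi\,p,\ \bar c(1-\bar\pi)\,q\big)\,d\mu$. A randomised classifier $f\colon\mathcal X\to[0,1]$ predicts $1$ on $x$ with probability $f(x)$. For a distribution $E$ of $(\mathsf X,\mathsf Z)$ on $\mathcal X\times\{0,1\}$ with $p=\Pr(\mathsf Z=1)$: $\mathrm{FNR}(f;E)=\mathbb E_{\mathsf X\mid\mathsf Z=1}[1-f(\mathsf X)]$, $\mathrm{FPR}(f;E)=\mathbb E_{\mathsf X\mid\mathsf Z=0}[f(\mathsf X)]$, $\mathrm{CS}(f;E,c)=p(1-c)\,\mathrm{FNR}(f;E)+(1-p)c\,\mathrm{FPR}(f;E)$,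 and $\mathrm{CS}^\diamond(f;E,c)=\min\big(\mathrm{CS}(f;E,c),\mathrm{CS}(1-f;E,c)\big)$. *)

(* Defs.v *)
From HB Require Import structures.
From mathcomp Require Import all_boot all_order all_algebra.
From mathcomp Require Import all_classical all_reals all_analysis.
Set Implicit Arguments. Unset Strict Implicit. Unset Printing Implicit Defensive.
Import Order.TTheory GRing.Theory Num.Theory.
Local Open Scope classical_set_scope.
Local Open Scope ring_scope.

(* The joint distribution D_jnt of (X, Ybar, Y) is represented as the law of
   random elements X : Omega -> T, Ybar, Y : Omega -> bool on a probability
   space (Omega, P).  A distribution Dbar of (X, Z) is encoded by a "base
   event" S of Omega: Dbar is the law of (X, Z) under P conditioned on S
   (S = setT for D / Dbar_DP, S = [Y = 1] for Dbar_EO). *)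

Section Defs.
Context {dO dT : measure_display} {Omega : measurableType dO}
  {T : measurableType dT} {R : realType}.

Definition Dint (P : probability Omega R) (S A : set Omega) (g : Omega -> R) : R :=
  Rintegral P (A `&` S) g / fine (P S).

Definition Dprob (P : probability Omega R) (S A : set Omega) : R :=
  fine (P (A `&` S)) / fine (P S).

Definition FNR (P : probability Omega R) (S : set Omega) (X : Omega -> T)
    (Z : set Omega) (f : T -> R) : R :=
  Dint P S Z (fun w => 1 - f (X w)) / Dprob P S Z.

Definition FPR (P : probability Omega R) (S : set Omega) (X : Omega -> T)
    (Z : set Omega) (f : T -> R) : R :=
  Dint P S (~` Z) (fun w => f (X w)) / Dprob P S (~` Z).

Definition CS (P : probability Omega R) (S : set Omega) (X : Omega -> T)
    (Z : set Omega) (f : T -> R) (c : R) : R :=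
  let p := Dprob P S Z in
  p * (1 - c) * FNR P S X Z f + (1 - p) * c * FPR P S X Z f.

Definition CSdiam (P : probability Omega R) (S : set Omega) (X : Omega -> T)
    (Z : set Omega) (f : T -> R) (c : R) : R :=
  Num.min (CS P S X Z f c) (CS P S X Z (fun x => 1 - f x) c).

(* base event selecting Dbar: eo = false gives Dbar_DP, eo = true gives Dbar_EO *)
Definition Dbar_event (eo : bool) (Y : Omega -> bool) : set Omega :=
  if eo then [set w | Y w] else setT.

(* eta is a ([0,1]-valued, measurable) version of Pr(Z = 1 | X = x) under
   P( . | S) *)
Definition cond_prob (P : probability Omega R) (S : set Omega) (X : Omega -> T)
    (Z : set Omega) (eta : T -> R) : Prop :=
  measurable_fun setT eta /\ (forall x, 0 <= eta x <= 1) /\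
  forall A : set T, measurable A ->
    (\int[P]_(w in X @^-1` A `&` S) (eta (X w))%:E
       = P (X @^-1` A `&` S `&` Z))%E.

Definition Vfront (P : probability Omega R) (X : Omega -> T) (Y Ybar : Omega -> bool)
    (S : set Omega) (c cb tau : R) : \bar R :=
  ereal_inf [set (CS P setT X [set w | Y w] f c)%:E | f in
    [set f : T -> R | [/\ measurable_fun setT f, (forall x, 0 <= f x <= 1) &
                         tau <= CSdiam P S X [set w | Ybar w] f cb]]].

Definition frontier (P : probability Omega R) (X : Omega -> T) (Y Ybar : Omega -> bool)
    (S : set Omega) (c cb tau : R) : \bar R :=
  (Vfront P X Y Ybar S c cb tau - Vfront P X Y Ybar S c cb 0)%E.

Definition Bcc (c cb u v : R) : R :=
  `|u - cb| * (if (u - cb) * (v - c) < 0 then 1 else 0).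

(* I_phi(Pbar_1, Pbar_0) = - \int min((1-cb) pibar p, cb (1-pibar) q) dmu,
   with mu the X-marginal of Dbar and p = etabar/pibar, q = (1-etabar)/(1-pibar)
   the densities of Pbar_1, Pbar_0 w.r.t. mu. *)
Definition Iphi (P : probability Omega R) (S : set Omega) (X : Omega -> T)
    (Zbar : set Omega) (etabar : T -> R) (cb : R) : R :=
  let pibar := Dprob P S Zbar in
  let p x := etabar x / pibar in
  let q x := (1 - etabar x) / (1 - pibar) in
  - Dint P S setT (fun w => Num.min ((1 - cb) * pibar * p (X w))
                                    (cb * (1 - pibar) * q (X w))).

Definition Delta (P : probability Omega R) (S : set Omega) (X : Omega -> T)
    (Zbar : set Omega) (etabar eta : T -> R) (c cb : R) : R :=
  Dint P S setT (fun w => Bcc c cb (etabar (X w)) (eta (X w)))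
  - Iphi P S X Zbar etabar cb.

End Defs.

(* Main.v *)
Require Import Defs.
From HB Require Import structures.
From mathcomp Require Import all_boot all_order all_algebra.
From mathcomp Require Import all_classical all_reals all_analysis.
From mathcomp Require Import measurable_realfun ring lra.
Import Order.TTheory GRing.Theory Num.Theory.
Import HBNNSimple.
Local Open Scope classical_set_scope.
Local Open Scope ring_scope.

Section transfer.
Context {dO dT : measure_display} {Omega : measurableType dO}
  {T : measurableType dT} {R : realType}.
Variables (P : probability Omega R) (S Z : set Omega) (X : Omega -> T) (e : T -> R).
Hypotheses (mS : measurable S) (mZ : measurable Z) (mX : measurable_fun setT X)
  (me : measurable_fun setT e) (e0 : forall x, 0 <= e x).
Hypothesis he : forall A, measurable A ->
  (\int[P]_(w in X @^-1` A `&` S) (e (X w))%:E = P (X @^-1` A `&` S `&` Z))%E.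

Lemma transfer_indic (B : set T) (r : R) : measurable B -> 0 <= r ->
  (\int[P]_(w in Z `&` S) (r * \1_B (X w))%:E =
   \int[P]_(w in S) (r * \1_B (X w) * e (X w))%:E)%E.
Proof.
move=> mB r0.
have mXB : measurable (X @^-1` B) by rewrite -[X @^-1` B]setTI; exact: mX.
have mZS : measurable (Z `&` S) by exact: measurableI.
have mIX : measurable_fun setT (fun w => \1_B (X w) : R).
  exact: measurableT_comp.
under eq_integral do rewrite EFinM.
rewrite ge0_integralZl_EFin //; last first.
  exact/measurable_EFinP/measurable_funTS.
rewrite (_ : (\int[P]_(x in Z `&` S) (\1_B (X x))%:E = \int[P]_(x in Z `&` S) (\1_(X @^-1` B) x)%:E)%E)//.
rewrite integral_indic //.
under [X in _ = X]eq_integral do rewrite -mulrA EFinM.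
rewrite ge0_integralZl_EFin //; first last.
- apply/measurable_EFinP/measurable_funTS/measurable_funM => //.
  exact: measurableT_comp.
- by move=> w _; rewrite lee_fin mulr_ge0.
have -> : X @^-1` B `&` (Z `&` S) = X @^-1` B `&` S `&` Z by rewrite -setIA [S `&` Z]setIC.
congr (_ * _)%E; apply: eq_trans (esym (he _ mB)) _.
rewrite integral_mkcondl; apply: eq_integral => w _.
rewrite /patch indicE; have h' : (X w \in B) = (w \in X @^-1` B) by [].
rewrite h'; case: ifP => _; by rewrite ?mul1r ?mul0r.
Qed.
Lemma transfer (g : T -> R) : measurable_fun setT g -> (forall x, 0 <= g x) ->
  (\int[P]_(w in Z `&` S) (g (X w))%:E = \int[P]_(w in S) (g (X w) * e (X w))%:E)%E.
Proof.
move=> mg g0.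
have mEg : measurable_fun setT (EFin \o g) by exact/measurable_EFinP.
pose h := nnsfun_approx measurableT mEg.
have hcvg x : (fun n => (h n x)%:E) @ \oo --> (g x)%:E.
  by apply: cvg_nnsfun_approx => // y _; rewrite lee_fin.
have hnd x : {homo (fun n => h n x) : m n / (m <= n)%N >-> m <= n}.
  by move=> m n mn; exact/lefP/nd_nnsfun_approx.
have mZS : measurable (Z `&` S) by exact: measurableI.
have mh n : measurable_fun setT (fun w => h n (X w)).
  exact: measurableT_comp.
transitivity (limn (fun n => \int[P]_(w in Z `&` S) (h n (X w))%:E)%E).
  rewrite -monotone_convergence //.
  - apply: eq_integral => w _; apply/esym/cvg_lim => //; exact: hcvg.
  - by move=> n; apply/measurable_EFinP/measurable_funTS.
  - by move=> n w _; rewrite lee_fin.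
  - by move=> w _ m n mn; rewrite lee_fin; exact: hnd.
transitivity (limn (fun n => \int[P]_(w in S) (h n (X w) * e (X w))%:E)%E); last first.
  rewrite -monotone_convergence //.
  - apply: eq_integral => w _; apply/cvg_lim => //; rewrite EFinM.
    under eq_fun do rewrite EFinM.
    by apply: cvgeZr => //; exact: hcvg.
  - move=> n; apply/measurable_EFinP/measurable_funTS/measurable_funM => //.
    exact: measurableT_comp.
  - by move=> n w _; rewrite lee_fin mulr_ge0.
  - by move=> w _ m n mn; rewrite lee_fin ler_wpM2r //; exact: hnd.
congr (limn _); apply/funext => n.
have hk k z : 0 <= k * \1_(h n @^-1` [set k]) z.
  by have := nnfun_muleindic_ge0 (h n) k z; rewrite -EFinM lee_fin.
under eq_integral do rewrite fimfunE -fsumEFin//.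
under [X in _ = X]eq_integral do rewrite fimfunE mulr_fsuml -fsumEFin//.
have mhk k : measurable_fun setT (fun x => k * \1_(h n @^-1` [set k]) (X x)).
  apply: measurable_funM => //; apply: measurableT_comp => //.
rewrite !ge0_integral_fsum//; first last.
- by move=> k w _; rewrite lee_fin.
- by move=> k; apply/measurable_EFinP/measurable_funTS.
- by move=> k w _; rewrite lee_fin mulr_ge0.
- move=> k; apply/measurable_EFinP/measurable_funTS/measurable_funM => //.
  exact: measurableT_comp.
apply: eq_fsbigr => r /[!inE] -[x _ <-]; apply: transfer_indic => //.
Qed.
End transfer.

Section cs.
Context {dO dT : measure_display} {Omega : measurableType dO}
  {T : measurableType dT} {R : realType}.
Variables (P : probability Omega R).

Lemma int_bnd (D : set Omega) (h : Omega -> R) (M : R) : measurable D ->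
  measurable_fun D h -> (forall w, `|h w| <= M) -> P.-integrable D (EFin \o h).
Proof.
move=> mD mh hM; apply: measurable_bounded_integrable => //.
  exact: (le_lt_trans (probability_le1 _ mD) (ltry _)).
exists M; split => [|y My w _]; first exact: num_real.
exact: le_trans (hM w) (ltW My).
Qed.

Lemma Rint_null (D : set Omega) (h : Omega -> R) : measurable D ->
  measurable_fun D h -> fine (P D) = 0 -> Rintegral P D h = 0.
Proof.
move=> mD mh PD0.
have PD : P D = 0%E by rewrite -[P D]fineK ?PD0 ?fin_num_measure.
by rewrite /Rintegral null_set_integral //; exact/measurable_EFinP.
Qed.

Lemma fine_split (S Z : set Omega) : measurable S -> measurable Z ->
  fine (P (Z `&` S)) + fine (P (~` Z `&` S)) = fine (P S).
Proof.
move=> mS mZ.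
have mZS : measurable (Z `&` S) by exact: measurableI.
have mZS' : measurable (~` Z `&` S) by apply: measurableI => //; exact: measurableC.
rewrite -fineD ?fin_num_measure //; congr fine.
rewrite -measureU //; first by rewrite -setIUl setUCr setTI.
by rewrite setIACA setICr set0I.
Qed.
End cs.

Lemma alg_cs {R : realType} (a b s I1 I2 c : R) : 0 < s -> a + b = s ->
  (a = 0 -> I1 = 0) -> (b = 0 -> I2 = 0) ->
  a / s * (1 - c) * (I1 / s / (a / s)) + (1 - a / s) * c * (I2 / s / (b / s))
  = ((1 - c) * I1 + c * I2) / s.
Proof.
move=> s0 hab h1 h2.
have sn : s != 0 by rewrite gt_eqF.
have [a0|a0] := eqVneq a 0.
  rewrite a0 (h1 a0) in hab *; have -> : b = s by rewrite -hab add0r.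
  rewrite !mul0r !mulr0 add0r subr0; field; done.
have [b0|b0] := eqVneq b 0.
  rewrite b0 (h2 b0) in hab *; have -> : a = s by rewrite -hab addr0.
  rewrite !mul0r !mulr0 addr0; field; done.
subst s.
field.
by rewrite sn a0 b0.
Qed.
Lemma in01M {R : realType} (x y : R) : 0 <= x <= 1 -> 0 <= y <= 1 -> 0 <= x * y <= 1.
Proof. by move=> /andP[? ?] /andP[? ?]; rewrite mulr_ge0 //= mulr_ile1. Qed.
Lemma in01B {R : realType} (x : R) : 0 <= x <= 1 -> 0 <= 1 - x <= 1.
Proof. by move=> /andP[? ?]; apply/andP; split; lra. Qed.
Lemma int01 {dO : measure_display} {Omega : measurableType dO} {R : realType}
  (P : probability Omega R) (D : set Omega) (h : Omega -> R) :
  measurable D -> measurable_fun setT h -> (forall w, 0 <= h w <= 1) ->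
  P.-integrable D (EFin \o h).
Proof.
move=> mD mh h01; apply: (int_bnd _ _ _ 1) => //; first exact: measurable_funTS.
by move=> w; case/andP: (h01 w) => ? ?; rewrite ger0_norm.
Qed.
Ltac mf := repeat first [ apply: measurable_funM | apply: measurable_funB
  | apply: measurable_funD | exact: measurable_cst | (apply: measurableT_comp; done) | done ].
Ltac in01 := repeat first [ done | apply: in01M | apply: in01B
  | match goal with H : forall _, 0 <= _ <= 1 |- _ => apply: H end ].
Section cs2.
Context {dO dT : measure_display} {Omega : measurableType dO}
  {T : measurableType dT} {R : realType}.
Variables (P : probability Omega R) (S Z : set Omega) (X : Omega -> T) (e : T -> R).
Hypotheses (mS : measurable S) (mZ : measurable Z) (mX : measurable_fun setT X)
  (PS : 0 < fine (P S)) (he : cond_prob P S X Z e).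

Lemma CS_eq (f : T -> R) (c : R) : measurable_fun setT f -> (forall x, 0 <= f x <= 1) -> 0 <= c <= 1 ->
  CS P S X Z f c = Rintegral P S (fun w => (1 - c) * ((1 - f (X w)) * e (X w))
                    + c * (f (X w) * (1 - e (X w)))) / fine (P S).
Proof.
move=> mf f01 cb01.
case: he => me [e01 hE].
have e0 x : 0 <= e x by case/andP: (e01 x).
have mZS : measurable (Z `&` S) by exact: measurableI.
have mZS' : measurable (~` Z `&` S) by apply: measurableI => //; exact: measurableC.
have mfX : measurable_fun setT (fun w => f (X w)) by exact: measurableT_comp.
have meX : measurable_fun setT (fun w => e (X w)) by exact: measurableT_comp.
have m1fX : measurable_fun setT (fun w => 1 - f (X w)) by apply: measurable_funB.
have bfX w : `|f (X w)| <= 1 by case/andP: (f01 (X w)) => ? ?; rewrite ger0_norm.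
have beX w : `|e (X w)| <= 1 by case/andP: (e01 (X w)) => ? ?; rewrite ger0_norm.
have b1fX w : `|1 - f (X w)| <= 1 by case/andP: (f01 (X w)) => ? ?; rewrite ger0_norm ?subr_ge0 //; lra.
have ha : Rintegral P (Z `&` S) (fun w => 1 - f (X w)) =
          Rintegral P S (fun w => (1 - f (X w)) * e (X w)).
  congr fine; apply: (transfer P S Z X e mS mZ mX me e0 hE (fun x => 1 - f x)).
    exact: measurable_funB.
  by move=> x; case/andP: (f01 x) => ? ?; rewrite subr_ge0.
have hb : Rintegral P (~` Z `&` S) (fun w => f (X w)) =
          Rintegral P S (fun w => f (X w) * (1 - e (X w))).
  have eS : (Z `&` S) `|` (~` Z `&` S) = S by rewrite -setIUl setUCr setTI.
  have hU := @Rintegral_setU _ _ _ P _ _ (fun w => f (X w)) mZS mZS'.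
  rewrite eS in hU.
  have -> : Rintegral P (~` Z `&` S) (fun w => f (X w)) =
     Rintegral P S (fun w => f (X w)) - Rintegral P (Z `&` S) (fun w => f (X w)).
    rewrite hU; first ring.
    - by apply: (int_bnd _ _ _ 1) => //; exact: measurable_funTS.
    - by apply/disj_set2P; rewrite setIACA setICr set0I.
  have -> : Rintegral P (Z `&` S) (fun w => f (X w)) =
            Rintegral P S (fun w => f (X w) * e (X w)).
    by congr fine; apply: (transfer P S Z X e) => // x; case/andP: (f01 x).
  rewrite -RintegralB //.
  - by apply: eq_Rintegral => w _; ring.
  - by apply: (int_bnd _ _ _ 1) => //; exact: measurable_funTS.
  - apply: (int_bnd _ _ _ 1) => //; first by apply: measurable_funTS; exact: measurable_funM.
    by move=> w; rewrite normrM; apply: mulr_ile1 => //.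
rewrite RintegralD //; first last.
- apply: int01 => //; first by mf.
  by move=> w; in01.
- apply: int01 => //; first by mf.
  by move=> w; in01.
rewrite RintegralZl //; last first.
  apply: int01 => //; first by mf.
  by move=> w; in01.
rewrite RintegralZl //; last first.
  apply: int01 => //; first by mf.
  by move=> w; in01.
rewrite -ha -hb /CS /FNR /FPR /Dint /Dprob /=.
apply: alg_cs => //.
- exact: fine_split.
- move=> a0; apply: Rint_null => //; exact: measurable_funTS.
- move=> b0; apply: Rint_null => //; exact: measurable_funTS.
Qed.
End cs2.
Lemma min_le_args {R : realType} (x y : R) : Num.min x y <= x /\ Num.min x y <= y.
Proof. by split; rewrite ge_min lexx ?orbT. Qed.

Lemma pw_phi {R : realType} (cb u pb : R) : 0 <= u <= 1 -> 0 <= cb <= 1 ->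
  Num.min ((1 - cb) * pb * (u / pb)) (cb * (1 - pb) * ((1 - u) / (1 - pb)))
  <= (1 - cb) * u /\
  Num.min ((1 - cb) * pb * (u / pb)) (cb * (1 - pb) * ((1 - u) / (1 - pb)))
  <= cb * (1 - u).
Proof.
move=> /andP[u0 u1] /andP[c0 c1].
have [h1 h2] := min_le_args ((1 - cb) * pb * (u / pb)) (cb * (1 - pb) * ((1 - u) / (1 - pb))).
split.
- apply: le_trans h1 _.
  have [->|pb0] := eqVneq pb 0; first by rewrite mulr0 mul0r mulr_ge0 // subr_ge0.
  by rewrite le_eqVlt; apply/orP; left; apply/eqP; field.
- apply: le_trans h2 _.
  have [pb1|pb1] := eqVneq (1 - pb) 0; first by rewrite pb1 mulr0 mul0r mulr_ge0 // subr_ge0.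
  by rewrite le_eqVlt; apply/orP; left; apply/eqP; field.
Qed.

Lemma pw1 {R : realType} (c cb u v pb : R) : 0 <= u <= 1 -> 0 <= cb <= 1 ->
  Bcc c cb u v + Num.min ((1 - cb) * pb * (u / pb)) (cb * (1 - pb) * ((1 - u) / (1 - pb)))
  <= (1 - cb) * ((1 - (if c < v then 1 else 0)) * u) + cb * ((if c < v then 1 else 0) * (1 - u)).
Proof.
move=> hu hc; have [hm1 hm2] := pw_phi cb u pb hu hc.
move: hu hc hm1 hm2 => /andP[u0 u1] /andP[c0 c1].
set m := Num.min _ _ => hm1 hm2.
rewrite /Bcc; case: (ltrP c v) => hcv; case: (lerP 0 (u - cb)) => hu;
  [rewrite ger0_norm // | rewrite ltr0_norm // | rewrite ger0_norm // | rewrite ltr0_norm //];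
  case: ifP => hp; nra.
Qed.

Lemma pw2 {R : realType} (c cb u v pb : R) : 0 <= u <= 1 -> 0 <= cb <= 1 ->
  Bcc (- c) cb u (- v) + Num.min ((1 - cb) * pb * (u / pb)) (cb * (1 - pb) * ((1 - u) / (1 - pb)))
  <= (1 - cb) * ((1 - (1 - (if c < v then 1 else 0))) * u) + cb * ((1 - (if c < v then 1 else 0)) * (1 - u)).
Proof.
move=> hu hc; have [hm1 hm2] := pw_phi cb u pb hu hc.
move: hu hc hm1 hm2 => /andP[u0 u1] /andP[c0 c1].
set m := Num.min _ _ => hm1 hm2.
rewrite /Bcc; case: (ltrP c v) => hcv; case: (lerP 0 (u - cb)) => hu;
  [rewrite ger0_norm // | rewrite ltr0_norm // | rewrite ger0_norm // | rewrite ltr0_norm //];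
  case: ifP => hp; nra.
Qed.

Lemma pw0 {R : realType} (c u g : R) : 0 <= u <= 1 -> 0 <= c <= 1 -> 0 <= g <= 1 ->
  (1 - c) * ((1 - (if c < u then 1 else 0)) * u) + c * ((if c < u then 1 else 0) * (1 - u))
  <= (1 - c) * ((1 - g) * u) + c * (g * (1 - u)).
Proof.
move=> /andP[u0 u1] /andP[c0 c1] /andP[g0 g1].
rewrite -subr_ge0; case: (ltrP c u) => hcu.
  have -> : (1 - c) * ((1 - g) * u) + c * (g * (1 - u)) -
    ((1 - c) * ((1 - 1) * u) + c * (1 * (1 - u))) = (1 - g) * (u - c) by ring.
  by apply: mulr_ge0; lra.
have -> : (1 - c) * ((1 - g) * u) + c * (g * (1 - u)) -
  ((1 - c) * ((1 - 0) * u) + c * (0 * (1 - u))) = g * (c - u) by ring.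
by apply: mulr_ge0; lra.
Qed.
Lemma in01C {R : realType} (c x y : R) : 0 <= c <= 1 -> 0 <= x <= 1 -> 0 <= y <= 1 ->
  0 <= (1 - c) * x + c * y <= 1.
Proof. by move=> /andP[? ?] /andP[? ?] /andP[? ?]; apply/andP; split; nra. Qed.

Ltac in01' := repeat first [ done | apply: in01C | apply: in01M | apply: in01B
  | match goal with H : forall _, 0 <= _ <= 1 |- _ => apply: H end ].

Lemma Bcc01 {R : realType} (c cb u v : R) : 0 <= u <= 1 -> 0 <= cb <= 1 ->
  0 <= Bcc c cb u v <= 1.
Proof.
move=> /andP[? ?] /andP[? ?]; rewrite /Bcc; case: ifP => _; rewrite ?mulr0 ?lexx ?ler01 //.
rewrite mulr1 normr_ge0 /=; case: (lerP 0 (u - cb)) => h;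
  [rewrite ger0_norm // | rewrite ltr0_norm //]; lra.
Qed.

Lemma phi01 {R : realType} (cb u pb : R) : 0 <= u <= 1 -> 0 <= cb <= 1 ->
  0 <= Num.min ((1 - cb) * pb * (u / pb)) (cb * (1 - pb) * ((1 - u) / (1 - pb))) <= 1.
Proof.
move=> hu hc; have [h1 _] := pw_phi cb u pb hu hc.
move: hu hc => /andP[? ?] /andP[? ?].
apply/andP; split; last by apply: le_trans h1 _; nra.
rewrite le_min; apply/andP; split.
  have [->|pb0] := eqVneq pb 0; first by rewrite mulr0 mul0r.
  have -> : (1 - cb) * pb * (u / pb) = (1 - cb) * u by field.
  by apply: mulr_ge0; lra.
have [pb1|pb1] := eqVneq (1 - pb) 0; first by rewrite pb1 mulr0 mul0r.
have -> : cb * (1 - pb) * ((1 - u) / (1 - pb)) = cb * (1 - u) by field.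
by apply: mulr_ge0; lra.
Qed.

Lemma mBcc {d : measure_display} {T : measurableType d} {R : realType} (c cb : R) (u v : T -> R) :
  measurable_fun setT u -> measurable_fun setT v ->
  measurable_fun setT (fun w => Bcc c cb (u w) (v w)).
Proof.
move=> mu mv.
have -> : (fun w => Bcc c cb (u w) (v w)) =
  (fun w => `|u w - cb| * \1_(`]-oo, 0[%classic) ((u w - cb) * (v w - c))).
  apply/funext => w; rewrite /Bcc indicE.
  case: ifPn => h.
    by rewrite mem_set ?mulr1 //= in_itv /= h.
  by rewrite memNset ?mulr0 //= in_itv /= (negbTE h).
apply: measurable_funM.
  by apply: measurableT_comp; [exact: normr_measurable | exact: measurable_funB].
apply: measurableT_comp; first by apply: measurable_indic; exact: measurable_itv.
exact: (measurable_funM (measurable_funB mu (measurable_cst _)) (measurable_funB mv (measurable_cst _))).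
Qed.
Theorem proposition3 (dO dT : measure_display) (Omega : measurableType dO)
  (T : measurableType dT) (R : realType) (P : probability Omega R)
  (X : Omega -> T) (Ybar Y : Omega -> bool) (c cb : R) (eo : bool)
  (eta etabar : T -> R) :
  measurable_fun setT X ->
  measurable [set w | Ybar w] -> measurable [set w | Y w] ->
  0 <= c <= 1 -> 0 <= cb <= 1 ->
  (eo -> (0 < P [set w | Y w])%E) ->
  cond_prob P setT X [set w | Y w] eta ->
  cond_prob P (Dbar_event eo Y) X [set w | Ybar w] etabar ->
  let S := Dbar_event eo Y in
  let tau_star :=
    Num.min (Delta P S X [set w | Ybar w] etabar eta c cb)
            (Delta P S X [set w | Ybar w] etabar (fun x => - eta x) (- c) cb) in
  forall tau : R, 0 <= tau <= tau_star ->
    frontier P X Y Ybar S c cb tau = 0%E.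
Proof.
move=> mX mYb mY c01 cb01 hPY hD hDb S tau_star tau /andP[tau0 htau].
have mS : measurable S by rewrite /S /Dbar_event; case: ifP.
have PS : 0 < fine (P S).
  rewrite /S /Dbar_event; case: ifPn => heo; last by rewrite probability_setT ltr01.
  apply: fine_gt0; rewrite hPY //=.
  exact: (le_lt_trans (probability_le1 _ mY) (ltry _)).
have PT : 0 < fine (P setT) by rewrite probability_setT ltr01.
have [me [e01 _]] := hD.
have [meb [eb01 _]] := hDb.
pose A := [set x | c < eta x].
have mA : measurable A.
  have -> : A = eta @^-1` `]c, +oo[.
    by apply/seteqP; split => x /=; rewrite in_itv /= andbT.
  by rewrite -[_ @^-1` _]setTI; apply: me => //; exact: measurable_itv.
pose fs : T -> R := \1_A.
have mfs : measurable_fun setT fs by exact/measurable_indicP.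
have fsE x : fs x = if c < eta x then 1 else 0.
  rewrite /fs indicE; case: (boolP (c < eta x)) => h.
    by rewrite mem_set.
  by rewrite memNset //= ; apply/negP.
have fs01 x : 0 <= fs x <= 1 by rewrite fsE; case: ifP => _; rewrite ?lexx ?ler01.
have mfs' : measurable_fun setT (fun x => 1 - fs x) by exact: measurable_funB.
have fs01' x : 0 <= 1 - fs x <= 1 by apply: in01B.
have K1 (g : T -> R) : measurable_fun setT g -> (forall x, 0 <= g x <= 1) ->
    CS P setT X [set w | Y w] fs c <= CS P setT X [set w | Y w] g c.
  move=> mg g01.
  rewrite (CS_eq P setT [set w | Y w] X eta measurableT mY mX PT hD) // (CS_eq P setT [set w | Y w] X eta measurableT mY mX PT hD) //.
  rewrite ler_pM2r ?invr_gt0 //.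
  apply: le_Rintegral => //.
  - by apply: int01 => //; [mf | move=> w; in01'].
  - by apply: int01 => //; [mf | move=> w; in01'].
  - move=> w _; rewrite fsE; apply: pw0 => //.
have meX : measurable_fun setT (fun w => etabar (X w)) by exact: measurableT_comp.
have mebX : measurable_fun setT (fun w => eta (X w)) by exact: measurableT_comp.
have K2a : Delta P S X [set w | Ybar w] etabar eta c cb <= CS P S X [set w | Ybar w] fs cb.
  rewrite (CS_eq P S [set w | Ybar w] X etabar mS mYb mX PS hDb) // /Delta /Iphi /Dint /= setTI.
  rewrite opprK -mulrDl ler_pM2r ?invr_gt0 //.
  rewrite -RintegralD //; first last.
  - apply: int01 => //; first by apply: measurable_minr; mf.
    by move=> w; apply: phi01.
  - apply: int01 => //; first by apply: mBcc.
    by move=> w; apply: Bcc01.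
  apply: le_Rintegral => //.
  - apply: (int_bnd _ _ _ 2) => //.
      apply: measurable_funTS; apply: measurable_funD; first exact: mBcc.
      by apply: measurable_minr; mf.
    move=> w; have := Bcc01 c cb (etabar (X w)) (eta (X w)) (eb01 (X w)) cb01.
    have := phi01 cb (etabar (X w)) (Dprob P S [set w | Ybar w]) (eb01 (X w)) cb01.
    move=> /andP[? ?] /andP[? ?]; rewrite ger0_norm; lra.
  - by apply: int01 => //; [mf | move=> w; in01'].
  - by move=> w _; rewrite fsE; apply: pw1.
have K2b : Delta P S X [set w | Ybar w] etabar (fun x => - eta x) (- c) cb <= CS P S X [set w | Ybar w] (fun x => 1 - fs x) cb.
  rewrite (CS_eq P S [set w | Ybar w] X etabar mS mYb mX PS hDb) // /Delta /Iphi /Dint /= setTI.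
  rewrite opprK -mulrDl ler_pM2r ?invr_gt0 //.
  rewrite -RintegralD //; first last.
  - apply: int01 => //; first by apply: measurable_minr; mf.
    by move=> w; apply: phi01.
  - apply: int01 => //; first by apply: mBcc => //; exact: measurableT_comp.
    by move=> w; apply: Bcc01.
  apply: le_Rintegral => //.
  - apply: (int_bnd _ _ _ 2) => //.
      apply: measurable_funTS; apply: measurable_funD; first by apply: mBcc => //; exact: measurableT_comp.
      by apply: measurable_minr; mf.
    move=> w; have := Bcc01 (- c) cb (etabar (X w)) (- eta (X w)) (eb01 (X w)) cb01.
    have := phi01 cb (etabar (X w)) (Dprob P S [set w | Ybar w]) (eb01 (X w)) cb01.
    move=> /andP[? ?] /andP[? ?]; rewrite ger0_norm; lra.
  - by apply: int01 => //; [mf | move=> w; in01'].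
  - by move=> w _; rewrite fsE; apply: pw2.
have K2 : tau_star <= CSdiam P S X [set w | Ybar w] fs cb.
  rewrite /CSdiam /tau_star le_min; apply/andP; split.
  - by apply: le_trans _ K2a; rewrite ge_min lexx.
  - by apply: le_trans _ K2b; rewrite ge_min lexx orbT.
have V t : t <= tau_star -> Vfront P X Y Ybar S c cb t = (CS P setT X [set w | Y w] fs c)%:E.
  move=> ht; rewrite /Vfront; apply/le_anti/andP; split.
  - apply: ereal_inf_lbound; exists fs => //; split => //.
    exact: le_trans ht K2.
  - apply: le_ereal_inf_tmp => _ [g [mg g01 _] <-]; rewrite lee_fin; exact: K1.
rewrite /frontier !V //; first by rewrite subee.
exact: le_trans tau0 htau.
Qed.
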